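(* For every $A\in\mathbb{R}_+^{n\times n}$, $$\min_{B\in\Omega(A)}\rho(B)\;\leq\;\frac{1}{n}\sum_{i=1}^n\sum_{j=1}^n a_{i,j}\;\leq\;\max_{B\in\Omega(A)}\rho(B).$$
   Context: $\mathbb{R}_+^{n\times n}$ denotes the set of $n\times n$ matrices with nonnegative real entries. For $A=(a_{i,j})\in\mathbb{R}_+^{n\times n}$, the set of row-permuted matrices is $\Omega(A)=\{B\in\mathbb{R}_+^{n\times n}:\ \forall i\ \exists\text{ a permutation }\phi_i \text{ of }\{1,\dots,n\}\text{ with } b_{i,j}=a_{i,\phi_i(j)}\ \forall j\}$, i.e. each row of $B$ is a rearrangement of the corresponding row of $A$. $\rho(B)$ denotes the spectral radius (Perron root) of $B$. $\Omega(A)$ is a finite set. *)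

(* Defs.v *)
From HB Require Import structures.
From mathcomp Require Import all_boot all_order fingroup perm all_algebra.
From mathcomp Require Import complex.
Set Implicit Arguments. Unset Strict Implicit. Unset Printing Implicit Defensive.
Import Order.TTheory GRing.Theory Num.Theory.
Local Open Scope ring_scope.

Definition nonneg_mx (R : rcfType) (n : nat) (A : 'M[R]_n) : Prop :=
  forall i j, 0 <= A i j.

(* B \in Omega(A): each row of B is a rearrangement of the corresponding row of A. *)
Definition row_permuted (R : rcfType) (n : nat) (A B : 'M[R]_n) : Prop :=
  forall i : 'I_n, exists phi : 'S_n, forall j : 'I_n, B i j = A i (phi j).

Definition eigenvalues (R : rcfType) (n : nat) (B : 'M[R]_n) : seq R[i] :=
  sval (closed_field_poly_normal (char_poly (map_mx (fun x : R => (x%:C)%C) B))).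

(* Spectral radius: the largest modulus of a complex eigenvalue (0 if n = 0). *)
Definition spectral_radius (R : rcfType) (n : nat) (B : 'M[R]_n) : R :=
  \big[Num.max/0]_(z <- eigenvalues B) Normc.normc z.

(* Main.v *)
Require Import Defs.
Set Warnings "-notation-overridden,-ambiguous-paths".
From HB Require Import structures.
From mathcomp Require Import all_boot all_order fingroup perm all_algebra.
From mathcomp Require Import complex polyrcf.
From mathcomp.algebra_tactics Require Import ring.
Import Order.TTheory GRing.Theory Num.Theory.
Local Open Scope ring_scope.

Section S.
Variable R : rcfType.

Lemma eigenvaluesE n (B : 'M[R]_n) z :
  (z \in eigenvalues B) = root (char_poly (map_mx (real_complex R) B)) z.
Proof.
rewrite /eigenvalues; case: closed_field_poly_normal => s /= hs.
by rewrite hs (monicP (char_poly_monic _)) scale1r root_prod_XsubC.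
Qed.

Lemma normc_real (x : R) : Normc.normc (x%:C)%C = `|x|.
Proof. by rewrite /Normc.normc /= expr0n /= addr0 sqrtr_sqr. Qed.

Lemma normc_ge0 (z : R[i]) : 0 <= Normc.normc z.
Proof. by case: z => a b; rewrite /= sqrtr_ge0. Qed.

Lemma normc_sum (I : Type) (r : seq I) (F : I -> R[i]) :
  Normc.normc (\sum_(i <- r) F i) <= \sum_(i <- r) Normc.normc (F i).
Proof.
elim: r => [|a r IH]; first by rewrite !big_nil Normc.normc0.
rewrite !big_cons; apply: le_trans (le_normcD _ _) _; exact: lerD.
Qed.

Lemma spec_ge0 n (B : 'M[R]_n) : 0 <= spectral_radius B.
Proof.
rewrite /spectral_radius; apply: (big_ind (fun y => 0 <= y)) => //.
  by move=> a b ha hb; rewrite le_max ha.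
by move=> z _; exact: normc_ge0.
Qed.

Lemma spec_ge n (B : 'M[R]_n) z : z \in eigenvalues B -> Normc.normc z <= spectral_radius B.
Proof.
move=> zin; rewrite /spectral_radius.
by apply: le_bigmax_seq.
Qed.

Lemma spec_le n (B : 'M[R]_n) c : 0 <= c -> (forall z, z \in eigenvalues B -> Normc.normc z <= c) ->
  spectral_radius B <= c.
Proof.
move=> c0 h; rewrite /spectral_radius big_seq; apply: (big_ind (fun y => y <= c)) => //.
by move=> a b ha hb; rewrite ge_max ha hb.
Qed.

Lemma char_poly_tr n (B : 'M[R[i]]_n) : char_poly B^T = char_poly B.
Proof.
rewrite /char_poly -det_tr; congr (\det _).
by apply/matrixP => i j; rewrite !mxE eq_sym.
Qed.

Lemma horner_char n (B : 'M[R]_n) c : (char_poly B).[c] = \det (c%:M - B).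
Proof.
rewrite /char_poly -horner_evalE -det_map_mx; congr (\det _).
apply/matrixP => i j; rewrite !mxE /= horner_evalE !hornerE.
by case: (i == j); rewrite /= ?hornerE ?mulr0n ?mulr1n.
Qed.
Lemma argmax_ex n (w : 'I_n -> R) (i0 : 'I_n) : exists i, forall j, w j <= w i.
Proof.
case: (@arg_maxP _ R _ i0 xpredT w isT) => i _ hi.
by exists i => j; apply: hi.
Qed.

Lemma CW n (B : 'M[R]_n) (x : 'I_n -> R) c :
 (forall i j, 0 <= B i j) -> (forall i, 0 <= x i) -> 0 <= c ->
 (forall i, \sum_j B i j * x j <= c * x i) ->
 (forall i, x i = 0 -> forall j, B i j = 0) -> spectral_radius B <= c.
Proof.
move=> B0 x0 c0 hB hx; apply: spec_le => // z.
rewrite eigenvaluesE -char_poly_tr -eigenvalue_root_char => /eigenvalueP [v hv vn0].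
have hv' i : z * v 0 i = \sum_j (B i j)%:C%C * v 0 j.
  move/matrixP: hv => /(_ 0 i); rewrite !mxE => <-.
  by apply: eq_bigr => j _; rewrite !mxE mulrC.
have [->|zn0] := eqVneq z 0; first by rewrite Normc.normc0.
have supp i : x i = 0 -> v 0 i = 0.
  move=> /hx hb; have := hv' i; rewrite big1; last by move=> j _; rewrite hb mul0r.
  by move/eqP; rewrite mulf_eq0 (negbTE zn0) => /eqP.
pose w j := Normc.normc (v 0 j) / x j.
have hw j : Normc.normc (v 0 j) = w j * x j.
  rewrite /w; have [xj0|xjn0] := eqVneq (x j) 0.
    by rewrite xj0 mulr0 supp // Normc.normc0.
  by rewrite divfK.
have [i0 hi0] : exists i0, v 0 i0 != 0.
  apply/existsP; apply: contraR vn0 => /existsPn h.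
  by apply/eqP/matrixP => a b; rewrite (ord1 a) mxE; exact/eqP/negPn/(h b).
have [i hi] := argmax_ex _ w i0.
have w0 : 0 < w i0.
  have xi0 : x i0 != 0 by apply: contra hi0 => /eqP /supp ->.
  rewrite /w divr_gt0 // ?lt_def ?xi0 ?x0 //.
  by rewrite normc_ge0 andbT; apply: contra hi0 => /eqP /Normc.eq0_normc ->.
have nvi : 0 < Normc.normc (v 0 i).
  rewrite lt_def normc_ge0 andbT; apply/negP => /eqP /Normc.eq0_normc vi0.
  have : w i0 <= w i by apply: hi.
  by rewrite /w vi0 Normc.normc0 mul0r leNgt w0.
rewrite -(ler_pM2r nvi) -Normc.normcM hv'.
apply: le_trans (normc_sum _ _ _) _.
apply: (@le_trans _ _ (w i * \sum_j B i j * x j)).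
  rewrite mulr_sumr; apply: ler_sum => j _.
  rewrite Normc.normcM normc_real ger0_norm // hw mulrCA.
  by rewrite ler_wpM2r ?mulr_ge0.
rewrite hw mulrCA; apply: ler_wpM2l => //; exact: le_trans (ltW w0) (hi i0).
Qed.
Lemma rho_ge n (B : 'M[R]_n) c : 0 < c -> \det (c%:M - B) <= 0 -> c <= spectral_radius B.
Proof.
move=> c0 hd.
have lc : lead_coef (char_poly B) = 1 := monicP (char_poly_monic B).
have lc0 : 0 < lead_coef (char_poly B) by rewrite lc ltr01.
have [T0 hT0] := @poly_pinfty_gt_lc _ (char_poly B) lc0.
pose T := Num.max T0 c.
have pT : 1 <= (char_poly B).[T] by rewrite -lc; apply: hT0; rewrite le_max lexx.
have cT : c <= T by rewrite le_max lexx orbT.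
have hm : (char_poly B).[c] <= 0 <= (char_poly B).[T].
  by rewrite horner_char hd (le_trans ler01 pT).
have [x xin rx] := @poly_ivt _ (char_poly B) c T cT hm.
have xc : c <= x by case/andP: xin.
apply: (le_trans (xc)) _.
have : (x%:C)%C \in eigenvalues B.
  by rewrite eigenvaluesE -map_char_poly fmorph_root.
move/spec_ge; rewrite normc_real ger0_norm //; exact: le_trans (ltW c0) xc.
Qed.
End S.

Section C.
Variables (R : rcfType) (n : nat) (A : 'M[R]_n.+1).
Hypothesis A0 : forall i j, 0 <= A i j.

Definition sh (k : 'I_n.+1) : 'S_n.+1 := perm (addrI k).
Lemma shE k j : sh k j = k + j. Proof. by rewrite permE. Qed.

Lemma sum_shift (F : 'I_n.+1 -> R) j : \sum_k F (k + j) = \sum_k F k.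
Proof. by rewrite [RHS](reindex_inj (addIr j)). Qed.

Lemma avg_le (F : 'I_n.+1 -> R) : exists k, F k * n.+1%:R <= \sum_l F l.
Proof.
case: (pickP (fun k => F k * n.+1%:R <= \sum_l F l)) => [k hk|h]; first by exists k.
have : \sum_(l < n.+1) \sum_m F m < \sum_(l < n.+1) F l * n.+1%:R.
  apply: ltr_sum; first by apply/hasP; exists ord0; rewrite ?mem_index_enum.
  by move=> l _; move: (h l) => /= /negbT; rewrite -ltNge.
by rewrite sumr_const card_ord -mulr_suml mulr_natr ltxx.
Qed.

Definition rs i := \sum_j A i j.
Definition S := \sum_i rs i.
Definition cc := n.+1%:R^-1 * S.

Lemma N0 : n.+1%:R != 0 :> R. Proof. by rewrite pnatr_eq0. Qed.

Lemma min_side : exists B, row_permuted A B /\ spectral_radius B <= cc.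
Proof.
have hk i : exists k : 'I_n.+1, (\sum_j A i (k + j) * rs j) * n.+1%:R <= rs i * S.
  have [k hk] := avg_le (fun k => \sum_j A i (k + j) * rs j).
  exists k; apply: le_trans hk _; rewrite exchange_big /= /S mulr_sumr.
  by apply: ler_sum => j _; rewrite -mulr_suml sum_shift.
have [kf hkf] := fin_all_exists hk.
exists (\matrix_(i, j) A i (sh (kf i) j)); split.
  by move=> i; exists (sh (kf i)) => j; rewrite mxE.
apply: (@CW _ _ _ rs).
- by move=> i j; rewrite mxE.
- by move=> i; apply: sumr_ge0.
- by rewrite /cc mulr_ge0 ?invr_ge0 ?ler0n //; apply: sumr_ge0 => i _; apply: sumr_ge0.
- move=> i; under eq_bigr do rewrite mxE shE.
  have hN : 0 < n.+1%:R :> R by rewrite ltr0Sn.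
  rewrite -(ler_pM2r hN); apply: le_trans (hkf i) _.
  rewrite /cc le_eqVlt; apply/orP; left; apply/eqP; field; rewrite -mulrS; exact: N0.
- by move=> i /psumr_eq0P h j; rewrite mxE h.
Qed.

Definition Mof (f : 'I_n.+1 -> option 'I_n.+1) : 'M[R]_n.+1 :=
  \matrix_(i, j) if f i is Some k then A i (k + j) else rs i / n.+1%:R.
Definition gg (M : 'M[R]_n.+1) := \det (cc%:M - M).

Lemma base : gg (Mof (fun _ => None)) = 0.
Proof.
apply/eqP/det0P; exists (const_mx 1).
  by apply/eqP => /matrixP /(_ 0 0); rewrite !mxE; apply/eqP; exact: oner_neq0.
rewrite mulmxBr mul_mx_scalar; apply/matrixP => a j; rewrite !mxE.
under eq_bigr do rewrite !mxE mul1r.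
by rewrite -mulr_suml mulr1 /cc -/S mulrC subrr.
Qed.

Lemma step m : forall f, #|[pred i | f i == None]| = m ->
  exists f', (forall i, f' i != None) /\ gg (Mof f') <= gg (Mof f).
Proof.
elim: m => [|m IH] f hf.
  exists f; split => // i; apply/negP => hi.
  by have := card0_eq hf i; rewrite !inE hi.
have [i0 hi0] : exists i0, f i0 == None.
  have : (0 < #|[pred i | f i == None]|)%N by rewrite hf.
  by case/card_gt0P => i0; rewrite inE => hi0; exists i0.
pose fk k := fun i => if i == i0 then Some k else f i.
have cardk k : #|[pred i | fk k i == None]| = m.
  move: hf; rewrite (cardD1 i0) inE hi0 add1n => -[<-].
  apply: eq_card => i; rewrite !inE /fk.
  by case: (i =P i0) => [->|_].
have cof k j : cofactor (cc%:M - Mof (fk k)) i0 j = cofactor (cc%:M - Mof f) i0 j.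
  rewrite /cofactor; congr (_ * \det _); apply/matrixP => a b; rewrite !mxE /fk.
  by have /negbTE -> : lift i0 a != i0 by rewrite eq_sym neq_lift.
have key : \sum_k gg (Mof (fk k)) = gg (Mof f) * n.+1%:R.
  rewrite /gg (expand_det_row _ i0).
  under eq_bigr => k _ do rewrite (expand_det_row _ i0).
  rewrite exchange_big mulr_suml /=; apply: eq_bigr => j _.
  under eq_bigr => k _ do rewrite cof !mxE /fk eqxx.
  rewrite -mulr_suml !mxE (eqP hi0) sumrB sumr_const card_ord (sum_shift (fun l => A i0 l)).
  rewrite -/(rs i0) mulrAC; congr (_ * _).
  rewrite mulrBl divfK ?N0 //; congr (_ - _).
  by rewrite mulr_natr.
have [k hk] := avg_le (fun k => gg (Mof (fk k))).
have hk' : gg (Mof (fk k)) <= gg (Mof f).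
  have hN : 0 < n.+1%:R :> R by rewrite ltr0Sn.
  by rewrite -(ler_pM2r hN) -key.
have [f' [hf' hg]] := IH (fk k) (cardk k).
by exists f'; split => //; apply: le_trans hg hk'.
Qed.

Lemma max_side : exists B, row_permuted A B /\ cc <= spectral_radius B.
Proof.
have [c0|c0] := leP cc 0.
  exists A; split; last by apply: le_trans c0 (@spec_ge0 _ _ A).
  by move=> i; exists 1%g => j; rewrite perm1.
have [f' [hf' hg]] := @step _ (fun _ => None) erefl.
rewrite base in hg.
pose kf i := odflt ord0 (f' i).
exists (\matrix_(i, j) A i (sh (kf i) j)); split.
  by move=> i; exists (sh (kf i)) => j; rewrite mxE.
apply: rho_ge => //.
have -> : \matrix_(i, j) A i (sh (kf i) j) = Mof f' by
  apply/matrixP => i j; rewrite !mxE shE /kf; move: (hf' i); case: (f' i).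
exact: hg.
Qed.
End C.

Theorem theorem3p1 (R : rcfType) (n : nat) (A : 'M[R]_n) :
  nonneg_mx A ->
  (exists B : 'M[R]_n, row_permuted A B /\
     spectral_radius B <= (n%:R)^-1 * \sum_(i < n) \sum_(j < n) A i j) /\
  (exists B : 'M[R]_n, row_permuted A B /\
     (n%:R)^-1 * \sum_(i < n) \sum_(j < n) A i j <= spectral_radius B).
Proof.
case: n A => [|n] A A0.
  split; exists A; (split; first by move=> i; exists 1%g => j; rewrite perm1).
    apply: (@CW _ _ _ (fun _ => 0)) => //; last by move=> [].
      by rewrite invr0 mul0r.
    by move=> [].
  by rewrite invr0 mul0r; exact: (@spec_ge0 _ _ A).
by split; [exact: min_side | exact: max_side].
Qed.
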